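(* Let $X\in\mathsf{CB_0}(\mathbf{\Delta}^1_1)$. Then $\mathbf{\Delta}^1_1(X)=\bigcup\{\mathbf{\Sigma}^0_\alpha(X)\mid\alpha<\omega_1\}$.
   Context: $\mathcal{N}=\omega^\omega$ is the Baire space. For a topological space $X$: $\mathbf{\Sigma}^0_0(X)=\{\emptyset\}$; $\mathbf{\Sigma}^0_1(X)$ is the set of open sets; $\mathbf{\Sigma}^0_2(X)$ is the set of countable unions of sets $U\setminus V$ with $U,V$ open; for $2<\alpha<\omega_1$, $\mathbf{\Sigma}^0_\alpha(X)$ is the set of countable unions of complements of sets in $\bigcup_{\beta<\alpha}\mathbf{\Sigma}^0_\beta(X)$. $\mathbf{\Sigma}^1_1(X)$ is the set of projections $\{x\in X\mid\exists p\in\mathcal{N}\,(p,x)\in A\}$ of sets $A\subseteq\mathcal{N}\times X$ whose complement lies in $\mathbf{\Sigma}^0_2(\mathcal{N}\times X)$; $\mathbf{\Pi}^1_1(X)$ consists of complements of $\mathbf{\Sigma}^1_1(X)$-sets, and $\mathbf{\Delta}^1_1(X)=\mathbf{\Sigma}^1_1(X)\cap\mathbf{\Pi}^1_1(X)$. $P\omega$ is the set of all subsets of $\omega$ with the Scott topology (basic open sets $\{A\subseteq\omega\mid F\subseteq A\}$, $F$ finite). $\mathsf{CB_0}(\mathbf{\Delta}^1_1)$ is the class of spaces homeomorphic to a subspace $S\subseteq P\omega$ with $S\in\mathbf{\Delta}^1_1(P\omega)$. *)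

(* Defs.v *)
From HB Require Import structures.
From mathcomp Require Import all_boot all_order all_algebra.
From mathcomp Require Import all_classical all_reals.
From mathcomp Require Import topology_structure product_topology nat_topology
  subtype_topology function_spaces.

Set Implicit Arguments.
Unset Strict Implicit.
Unset Printing Implicit Defensive.

Local Open Scope classical_set_scope.

(* Countable ordinals, represented by Brouwer trees.  Every Brouwer   *)
(* tree denotes a countable ordinal and every countable ordinal       *)
(* (alpha < omega_1) is denoted by some Brouwer tree.                 *)
Inductive ord : Type :=
| OZ : ord
| OS : ord -> ord
| OL : (nat -> ord) -> ord.

Inductive ord_le : ord -> ord -> Prop :=
| ord_le_Z b : ord_le OZ b
| ord_le_S a b : ord_le a b -> ord_le (OS a) (OS b)
| ord_le_limR a (f : nat -> ord) n : ord_le a (f n) -> ord_le a (OL f)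
| ord_le_limL (f : nat -> ord) b : (forall n, ord_le (f n) b) -> ord_le (OL f) b.

Definition ord_lt (a b : ord) : Prop := ord_le (OS a) b.
Definition ord_eq (a b : ord) : Prop := ord_le a b /\ ord_le b a.

Definition ord1 : ord := OS OZ.
Definition ord2 : ord := OS (OS OZ).

Definition Sigma02 {X : topologicalType} (A : set X) : Prop :=
  exists U V : nat -> set X,
    (forall n, open (U n) /\ open (V n)) /\
    A = \bigcup_(n in [set: nat]) (U n `\` V n).

Inductive Sigma0 {X : topologicalType} : ord -> set X -> Prop :=
| Sigma0_zero a : ord_eq a OZ -> Sigma0 a set0
| Sigma0_one a A : ord_eq a ord1 -> open A -> Sigma0 a A
| Sigma0_two a A : ord_eq a ord2 -> Sigma02 A -> Sigma0 a A
| Sigma0_big a (b : nat -> ord) (C : nat -> set X) :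
    ord_lt ord2 a ->
    (forall n, ord_lt (b n) a) ->
    (forall n, Sigma0 (b n) (C n)) ->
    Sigma0 a (\bigcup_(n in [set: nat]) ~` C n).

Definition Baire : Type := prod_topology (fun _ : nat => nat).

Definition Sigma11 {X : topologicalType} (B : set X) : Prop :=
  exists A : set (Baire * X)%type,
    Sigma02 (~` A) /\ B = [set x | exists p : Baire, A (p, x)].

Definition Pi11 {X : topologicalType} (B : set X) : Prop := Sigma11 (~` B).

Definition Delta11 {X : topologicalType} (B : set X) : Prop :=
  Sigma11 B /\ Pi11 B.

(* P(omega) with the Scott topology: basic open sets {A | F <= A},    *)
(* F a finite subset of omega (given by a list).                      *)
Definition Pomega : Type := set nat.
HB.instance Definition _ := Choice.on Pomega.

Definition fin_index : Type := seq nat.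
HB.instance Definition _ := Choice.on fin_index.
HB.instance Definition _ := isPointed.Build fin_index [::].

Definition scott_basic (F : fin_index) : set Pomega :=
  [set A : Pomega | forall n, n \in F -> A n].

Lemma scott_cover : \bigcup_(F in [set: fin_index]) scott_basic F = setT.
Proof.
apply/seteqP; split => // A _; exists [::] => //= n; by rewrite in_nil.
Qed.

Lemma scott_join (F G : fin_index) (A : Pomega) :
  [set: fin_index] F -> [set: fin_index] G -> scott_basic F A -> scott_basic G A ->
  exists H, [/\ [set: fin_index] H, scott_basic H A &
    scott_basic H `<=` scott_basic F `&` scott_basic G].
Proof.
move=> _ _ AF AG; exists (F ++ G); split => //.
- by move=> n; rewrite mem_cat => /orP[/AF|/AG].
- move=> B HB; split => n Hn; apply: HB; by rewrite mem_cat Hn ?orbT.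
Qed.

HB.instance Definition _ :=
  @isBaseTopological.Build Pomega fin_index [set: fin_index] scott_basic
    scott_cover scott_join.

Definition homeomorphic (X Y : topologicalType) : Prop :=
  exists (f : X -> Y) (g : Y -> X),
    [/\ cancel f g, cancel g f, continuous f & continuous g].

Definition CB0_Delta11 (X : topologicalType) : Prop :=
  exists S : set Pomega, Delta11 S /\ homeomorphic X (set_type S).

(* Main.v *)
Require Import Defs.
From HB Require Import structures.
From mathcomp Require Import all_boot all_order all_algebra.
From mathcomp Require Import all_classical all_reals.
From mathcomp Require Import topology_structure product_topology nat_topology
  subtype_topology function_spaces.
From mathcomp Require Import discrete_topology.

Local Open Scope classical_set_scope.
Lemma ord_le_refl a : ord_le a a.
Proof.
elim: a => [|a IH|f IH]; first exact: ord_le_Z.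
  exact: ord_le_S.
by apply: ord_le_limL => n; apply: (@ord_le_limR _ _ n).
Qed.

Lemma ord_le_trans a b : ord_le a b -> forall c, ord_le b c -> ord_le a c.
Proof.
elim=> {a b} [b|a b Hab IH|a f n Hafn IH|f b Hfb IH] c H2.
- exact: ord_le_Z.
- remember (OS b) as b' eqn:E; elim: H2 b E Hab IH => //.
  + move=> a' b'' H _ b [E] Hab IH; subst a'; apply: ord_le_S; exact: IH.
  + move=> a' g m H IH2 b E Hab IH; apply: (@ord_le_limR _ _ m); exact: IH2 E Hab IH.
- remember (OL f) as g eqn:E; elim: H2 f E n Hafn IH => //.
  + move=> a' g' m H IH2 f E n Hafn IH; apply: (@ord_le_limR _ _ m); exact: IH2 E n Hafn IH.
  + move=> f' b' H _ f [E] n Hafn IH; subst f'; exact: IH (H n).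
- by apply: ord_le_limL => n; apply: IH.
Qed.

Lemma ord_lt_lim (g : nat -> ord) n : ord_lt (g n) (OS (OL g)).
Proof. by apply: ord_le_S; apply: (@ord_le_limR _ _ n); exact: ord_le_refl. Qed.

Definition Borel {X : topologicalType} (B : set X) := exists a, Sigma0 a B.

Section BorelClosure.
Context {X : topologicalType}.

Lemma Borel_open (U : set X) : open U -> Borel U.
Proof. by move=> oU; exists Defs.ord1; apply: Sigma0_one => //; split; exact: ord_le_refl. Qed.

Lemma Borel_Sigma02 (U : set X) : Sigma02 U -> Borel U.
Proof. by move=> oU; exists Defs.ord2; apply: Sigma0_two => //; split; exact: ord_le_refl. Qed.

Lemma Borel_set0 : Borel (@set0 X).
Proof. by exists OZ; apply: Sigma0_zero; split; exact: ord_le_refl. Qed.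

Lemma Sigma0_bigU (b : nat -> ord) (C : nat -> set X) :
  (forall n, Sigma0 (b n) (C n)) ->
  Borel (\bigcup_(n in [set: nat]) ~` C n).
Proof.
move=> H.
exists (OS (OL (fun n => if n is n'.+1 then b n' else Defs.ord2))).
apply: Sigma0_big => //; first exact: (ord_lt_lim _ 0).
by move=> n; exact: (ord_lt_lim (fun n => if n is n'.+1 then b n' else Defs.ord2) n.+1).
Qed.

Lemma Borel_compl (B : set X) : Borel B -> Borel (~` B).
Proof.
move=> [a Ha].
have -> : ~` B = \bigcup_(n in [set: nat]) ~` (fun _ => B) n.
  by apply/seteqP; split => [x Bx|x [n _ Bx]] //; exists 0.
by apply: (@Sigma0_bigU (fun _ => a)).
Qed.

Lemma Borel_bigcup (C : nat -> set X) :
  (forall n, Borel (C n)) -> Borel (\bigcup_(n in [set: nat]) C n).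
Proof.
move=> H.
have H' : forall n, exists a, Sigma0 a (~` C n) by move=> n; apply: Borel_compl.
have [c Hc] := choice H'.
have -> : \bigcup_(n in [set: nat]) C n = \bigcup_(n in [set: nat]) ~` (~` C n).
  by apply: eq_bigcupr => n _; rewrite setCK.
exact: (@Sigma0_bigU c (fun n => ~` C n)).
Qed.

Lemma Borel_bigcap (C : nat -> set X) :
  (forall n, Borel (C n)) -> Borel (\bigcap_(n in [set: nat]) C n).
Proof.
move=> H; rewrite -[X in Borel X]setCK setC_bigcap.
by apply: Borel_compl; apply: Borel_bigcup => n; apply: Borel_compl.
Qed.

End BorelClosure.

Lemma Sigma02_preimage {X Y : topologicalType} (f : X -> Y) (B : set Y) :
  continuous f -> Sigma02 B -> Sigma02 (f @^-1` B).
Proof.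
move=> /continuousP cf [U [V [oUV ->]]].
exists (fun n => f @^-1` U n), (fun n => f @^-1` V n); split.
  by move=> n; split; apply: cf; case: (oUV n).
by rewrite preimage_bigcup; apply: eq_bigcupr => n _; rewrite setDE preimage_setI -preimage_setC.
Qed.

Lemma Sigma0_preimage {X Y : topologicalType} (f : X -> Y) a (B : set Y) :
  continuous f -> Sigma0 a B -> Sigma0 a (f @^-1` B).
Proof.
move=> cf; elim=> {a B}.
- by move=> a Ha; rewrite preimage_set0; apply: Sigma0_zero.
- by move=> a A Ha oA; apply: Sigma0_one => //; move/continuousP: cf; apply.
- by move=> a A Ha sA; apply: Sigma0_two => //; apply: Sigma02_preimage.
- move=> a b C H1 H2 H3 IH; rewrite preimage_bigcup.
  under eq_bigcupr do rewrite -preimage_setC.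
  exact: Sigma0_big.
Qed.

Lemma Borel_preimage {X Y : topologicalType} (f : X -> Y) (B : set Y) :
  continuous f -> Borel B -> Borel (f @^-1` B).
Proof. by move=> cf [a Ha]; exists a; apply: Sigma0_preimage. Qed.
Lemma fst_cont {A C : topologicalType} : continuous (fst : A * C -> A).
Proof. by move=> z; apply: cvg_fst. Qed.
Lemma snd_cont {A C : topologicalType} : continuous (snd : A * C -> C).
Proof. by move=> z; apply: cvg_snd. Qed.

Lemma pair_map_continuous {A B C : topologicalType} (f : A -> B) :
  continuous f -> continuous (fun z : A * C => (f z.1, z.2)).
Proof.
move=> cf z; apply: cvg_pair.
  exact: (continuous_comp (@fst_cont A C z) (cf z.1)).
exact: (@snd_cont A C z).
Qed.

Lemma pair_map2_continuous {A B C : topologicalType} (f : C -> B) :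
  continuous f -> continuous (fun z : A * C => (z.1, f z.2)).
Proof.
move=> cf z; apply: cvg_pair; first exact: (@fst_cont A C z).
exact: (continuous_comp (@snd_cont A C z) (cf z.2)).
Qed.

Lemma reindex_continuous (s : nat -> nat) :
  continuous (fun p : Baire => ((fun i => p (s i)) : Baire)).
Proof.
move=> p; apply/pointwise_cvgP => t.
exact: (@proj_continuous nat (fun _ => nat) (s t) p).
Qed.
Section Sigma02Lemmas.
Context {X : topologicalType}.

Lemma Sigma02_open (U : set X) : open U -> Sigma02 U.
Proof.
move=> oU; exists (fun _ => U), (fun _ => set0); split.
  by move=> _; split => //; exact: open0.
apply/seteqP; split => [x Ux|x [n _ [Ux _]]] //; by exists 0 => //; split.
Qed.

Lemma Sigma02_copen (U : set X) : open U -> Sigma02 (~` U).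
Proof.
move=> oU; exists (fun _ => setT), (fun _ => U); split.
  by move=> _; split => //; exact: openT.
apply/seteqP; split => [x Ux|x [n _ [_ Ux]]] //; by exists 0 => //; split.
Qed.

Lemma Sigma02_bigcup (C : nat -> set X) :
  (forall n, Sigma02 (C n)) -> Sigma02 (\bigcup_(n in [set: nat]) C n).
Proof.
move=> H.
have H' : forall n, exists uv : (nat -> set X) * (nat -> set X),
    (forall m, open (uv.1 m) /\ open (uv.2 m)) /\
    C n = \bigcup_(m in [set: nat]) (uv.1 m `\` uv.2 m).
  by move=> n; have [U [V HUV]] := H n; exists (U, V).
have [UV HUV] := choice H'.
pose U k := if @unpickle (nat * nat)%type k is Some (n, m) then (UV n).1 m else set0.
pose V k := if @unpickle (nat * nat)%type k is Some (n, m) then (UV n).2 m else set0.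
exists U, V; split.
  move=> k; rewrite /U /V; case: (unpickle k) => [[n m]|]; last by split; exact: open0.
  by case: (HUV n) => /(_ m).
apply/seteqP; split.
  move=> x [n _]; case: (HUV n) => _ -> [m _ Hm].
  by exists (pickle (n, m)) => //; rewrite /U /V pickleK.
move=> x [k _]; rewrite /U /V; case: (unpickle k) => [[n m]|]; last by case.
move=> Hm; exists n => //; case: (HUV n) => _ ->; by exists m.
Qed.

Lemma Sigma02_setU (A B : set X) : Sigma02 A -> Sigma02 B -> Sigma02 (A `|` B).
Proof.
move=> hA hB.
have -> : A `|` B = \bigcup_(n in [set: nat]) (if n is 0 then A else B).
  apply/seteqP; split => [x [Ax|Bx]|x [[|n] _ H]]; by [exists 0|exists 1|left|right].
by apply: Sigma02_bigcup => -[|n].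
Qed.

Lemma Sigma02_setI_open (O A : set X) : open O -> Sigma02 A -> Sigma02 (O `&` A).
Proof.
move=> oO [U [V [oUV ->]]].
exists (fun n => O `&` U n), V; split.
  by move=> n; case: (oUV n) => oU oV; split => //; exact: openI.
apply/seteqP; split => [x [Ox [n _ [Ux Vx]]]|x [n _ [[Ox Ux] Vx]]].
  by exists n.
by split => //; exists n.
Qed.

End Sigma02Lemmas.
Definition tl (p : Baire) : Baire := fun i => p i.+1.
Definition dec (n : nat) (p : Baire) : Baire := fun i => p (pickle (n, i)).

Lemma coord_cont (i : nat) : continuous (fun p : Baire => p i).
Proof. by move=> p; exact: (@proj_continuous nat (fun _ => nat) i p). Qed.

Lemma open_coord0 {X : topologicalType} (n : nat) :
  open [set z : Baire * X | z.1 0 = n].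
Proof.
have -> : [set z : Baire * X | z.1 0 = n] = fst @^-1` ((fun p : Baire => p 0) @^-1` [set n]) by [].
apply: (proj1 (continuousP _) (@fst_cont Baire X)).
apply: (proj1 (continuousP _) (coord_cont 0)).
exact: discrete_open.
Qed.

Section Sigma11Lemmas.
Context {X : topologicalType}.

Lemma Pi02_Sigma11 (B : set X) : Sigma02 (~` B) -> Sigma11 B.
Proof.
move=> hB; exists [set z : Baire * X | B z.2]; split.
  have -> : ~` [set z : Baire * X | B z.2] = snd @^-1` (~` B) by [].
  exact: Sigma02_preimage (@snd_cont Baire X) hB.
apply/seteqP; split => [x Bx|x [p Bx]] //.
by exists ((fun _ => 0%N) : Baire).
Qed.

Lemma Sigma11_bigcup (B : nat -> set X) :
  (forall n, Sigma11 (B n)) -> Sigma11 (\bigcup_(n in [set: nat]) B n).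
Proof.
move=> H; have [A HA] := choice H.
exists [set z : Baire * X | A (z.1 0) (tl z.1, z.2)]; split.
  have -> : ~` [set z : Baire * X | A (z.1 0) (tl z.1, z.2)] =
    \bigcup_(n in [set: nat]) ([set z : Baire * X | z.1 0 = n] `&`
       (fun z : Baire * X => (tl z.1, z.2)) @^-1` (~` A n)).
    apply/seteqP; split => [z Hz|z [n _ [/= Hn Hz]]].
      by exists (z.1 0) => //.
    by rewrite /= Hn.
  apply: Sigma02_bigcup => n; apply: Sigma02_setI_open; first exact: open_coord0.
  apply: Sigma02_preimage; last by case: (HA n).
  exact: pair_map_continuous (reindex_continuous S).
apply/seteqP; split.
  move=> x [n _]; case: (HA n) => _ -> [p Hp].
  by exists ((fun i => if i is i'.+1 then p i' else n) : Baire).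
move=> x [p /= Hp]; exists (p 0) => //; case: (HA (p 0)) => _ ->.
by exists (tl p).
Qed.

Lemma Sigma11_bigcap (B : nat -> set X) :
  (forall n, Sigma11 (B n)) -> Sigma11 (\bigcap_(n in [set: nat]) B n).
Proof.
move=> H; have [A HA] := choice H.
exists [set z : Baire * X | forall n, A n (dec n z.1, z.2)]; split.
  have -> : ~` [set z : Baire * X | forall n, A n (dec n z.1, z.2)] =
    \bigcup_(n in [set: nat])
       ((fun z : Baire * X => (dec n z.1, z.2)) @^-1` (~` A n)).
    apply/seteqP; split => [z /= Hz|z [n _ /= Hz] Hall]; last exact: Hz (Hall n).
    by have [n Hn] := (proj2 (boolp.existsNP _)) Hz; exists n.
  apply: Sigma02_bigcup => n; apply: Sigma02_preimage; last by case: (HA n).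
  exact: pair_map_continuous (reindex_continuous (fun i => pickle (n, i))).
apply/seteqP; split.
  move=> x Hx.
  have Hx' : forall n, exists p : Baire, A n (p, x).
    by move=> n; have := Hx n I; case: (HA n) => _ ->.
  have [q Hq] := choice Hx'.
  exists ((fun k => if @unpickle (nat * nat)%type k is Some (n, i) then q n i else 0%N) : Baire).
  move=> n /=; rewrite /dec.
  have -> : (fun i => match @unpickle (nat * nat)%type (pickle (n, i)) with
                       | Some (n0, i0) => q n0 i0 | None => 0%N end) = q n.
    by apply: funext => i; rewrite pickleK.
  exact: Hq.
move=> x [p /= Hp] n _; case: (HA n) => _ ->; by exists (dec n p).
Qed.

End Sigma11Lemmas.
Lemma Sigma0_Delta11 {X : topologicalType} a (B : set X) :
  Sigma0 a B -> Sigma11 B /\ Sigma11 (~` B).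
Proof.
elim=> {a B}.
- move=> a _; split; apply: Pi02_Sigma11.
    by rewrite setC0; apply: Sigma02_open; exact: openT.
  by rewrite setCK; apply: Sigma02_open; exact: open0.
- move=> a A _ oA; split; apply: Pi02_Sigma11; first exact: Sigma02_copen.
  by rewrite setCK; apply: Sigma02_open.
- move=> a A _ sA; split; last by apply: Pi02_Sigma11; rewrite setCK.
  case: sA => U [V [oUV ->]]; apply: Sigma11_bigcup => n; apply: Pi02_Sigma11.
  rewrite setDE setCI setCK; case: (oUV n) => oU oV.
  by apply: Sigma02_setU; [exact: Sigma02_copen|exact: Sigma02_open].
- move=> a b C _ _ _ IH; split.
    by apply: Sigma11_bigcup => n; case: (IH n).
  rewrite setC_bigcup; apply: Sigma11_bigcap => n; rewrite setCK.
  by case: (IH n).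
Qed.

Lemma Borel_Delta11 {X : topologicalType} (B : set X) : Borel B -> Delta11 B.
Proof. by move=> [a /Sigma0_Delta11 [h1 h2]]; split. Qed.

Lemma Sigma11_preimage {X Y : topologicalType} (g : Y -> X) (B : set X) :
  continuous g -> Sigma11 B -> Sigma11 (g @^-1` B).
Proof.
move=> cg [A [hA ->]].
exists ((fun z : Baire * Y => (z.1, g z.2)) @^-1` A); split.
  rewrite preimage_setC; apply: Sigma02_preimage => //.
  exact: pair_map2_continuous.
by apply/seteqP; split => [y [p Hp]|y [p Hp]]; exists p.
Qed.

Lemma Delta11_preimage {X Y : topologicalType} (g : Y -> X) (B : set X) :
  continuous g -> Delta11 B -> Delta11 (g @^-1` B).
Proof.
move=> cg [h1 h2]; split; first exact: Sigma11_preimage.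
by rewrite /Pi11 preimage_setC; apply: Sigma11_preimage.
Qed.
Set Implicit Arguments.
Unset Strict Implicit.
Section AbstractSep.
Context (T : Type) (code : nat -> T -> nat).
Context (code_nest : forall j w w', code j.+1 w = code j.+1 w' -> code j w = code j w').
Context (code_complete : forall u : nat -> T,
  (forall j, code j (u j.+1) = code j (u j)) -> exists w, forall j, code j w = code j (u j)).
Context (Sep : set T -> set T -> Prop).
Context (Sep_union : forall (Z Z' : nat -> set T), (forall m n, Sep (Z m) (Z' n)) ->
  Sep (\bigcup_(m in [set: nat]) Z m) (\bigcup_(n in [set: nat]) Z' n)).
Context (Sep_mono : forall Z Z' Z1 Z1', Sep Z Z' -> Z1 `<=` Z -> Z1' `<=` Z' -> Sep Z1 Z1').
Context (Sep0 : forall Z', Sep set0 Z').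
Context (Sep0' : forall Z, Sep Z set0).

Lemma code_down i j a b : (i <= j)%N -> code j a = code j b -> code i a = code i b.
Proof.
move=> /subnK <-; elim: (j - i)%N => [//|d IH] H.
by apply: IH; apply: code_nest; rewrite addSn in H.
Qed.

Definition constr_ok (Phi : set T) (O F G : nat -> set T) :=
  [/\ forall k, Phi `<=` G k,
      forall k, Phi `<=` F k `|` O k,
      forall k w, Phi w -> O k w -> exists l, forall w', code l w' = code l w -> G k w' -> O k w' &
      forall w, (forall k, (exists l, forall w', code l w' = code l w -> G k w' -> O k w') \/
                           (forall j, exists w', code j w' = code j w /\ Phi w' /\ F k w')) -> Phi w].

Definition goodP (O F G : nat -> set T) (k : nat) (Y : set T) :=
  (forall y y', Y y -> Y y' -> code k y = code k y') /\
  (Y `<=` F k \/ exists l m, (forall y, Y y -> code l y = m) /\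
                              (forall w', code l w' = m -> G k w' -> O k w')).

Lemma split2 (Z Z' : set T) (D D' : nat -> set T) :
  Z `<=` \bigcup_(m in [set: nat]) D m -> Z' `<=` \bigcup_(n in [set: nat]) D' n ->
  ~ Sep Z Z' -> exists m n, ~ Sep (D m) (D' n).
Proof.
move=> HZ HZ' nS; apply: boolp.contrapT => Hn; apply: nS.
apply: Sep_mono HZ HZ'; apply: Sep_union => m n.
apply: boolp.contrapT => Hmn; apply: Hn; by exists m, n.
Qed.

Lemma level_split (Z : set T) j :
  Z `<=` \bigcup_(c in [set: nat]) (Z `&` [set y | code j y = c]).
Proof. by move=> y Zy; exists (code j y). Qed.

Lemma constr_split (Phi : set T) O F G (hc : constr_ok Phi O F G) k (Z : set T) :
  Z `<=` Phi ->
  exists D : nat -> set T, Z `<=` \bigcup_(n in [set: nat]) D n /\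
    forall n, D n `<=` Z /\ (D n `<=` F k \/ exists l m, (forall y, D n y -> code l y = m) /\
                              (forall w', code l w' = m -> G k w' -> O k w')).
Proof.
case: hc => _ hFO hrel _ ZP.
exists (fun n => if n is n'.+1 then
   Z `&` [set y | exists l m, @unpickle (nat * nat)%type n' = Some (l, m) /\ code l y = m /\
                   (forall w', code l w' = m -> G k w' -> O k w')]
  else Z `&` F k); split.
  move=> y Zy; case: (hFO k y (ZP y Zy)) => [Fy|Oy]; first by exists 0.
  have [l Hl] := hrel k y (ZP y Zy) Oy.
  exists (pickle (l, code l y)).+1 => //; split => //.
  by exists l, (code l y); rewrite pickleK.
move=> [|n]; first by split => [y []|]; [|left => y []].
split; first by move=> y [].
case: (@unpickle (nat * nat)%type n) => [[l m]|]; last first.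
  by left => y [_ [l [m [//]]]].
have [Hc|Hc] := boolp.pselect (forall w', code l w' = m -> G k w' -> O k w').
  right; exists l, m; split => // y [_ [l' [m' [[<- <-] []]]]] //.
by left => y [_ [l' [m' [[<- <-] [_ //]]]]].
Qed.

Context (Phi Psi : set T) (O F G O' F' G' : nat -> set T).
Context (hPhi : constr_ok Phi O F G) (hPsi : constr_ok Psi O' F' G').
Context (haus : forall w w', Phi w -> Psi w' ->
  exists j, Sep [set v | code j v = code j w] [set v | code j v = code j w']).


Lemma step_lemma k (Z Z' : set T) : Z `<=` Phi -> Z' `<=` Psi -> ~ Sep Z Z' ->
  exists Z1 Z1', [/\ Z1 `<=` Z, Z1' `<=` Z', ~ Sep Z1 Z1',
     goodP O F G k Z1 & goodP O' F' G' k Z1'].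
Proof.
move=> ZP ZP' nS.
have [c [c' nS2]] := split2 (@level_split Z k) (@level_split Z' k) nS.
have [D [HD HDn]] := @constr_split _ _ _ _ hPhi k (Z `&` [set y | code k y = c])
  (fun y Hy => ZP y (proj1 Hy)).
have [D' [HD' HDn']] := @constr_split _ _ _ _ hPsi k (Z' `&` [set y | code k y = c'])
  (fun y Hy => ZP' y (proj1 Hy)).
have [m [n nS3]] := split2 HD HD' nS2.
exists (D m), (D' n); split => //.
- by move=> y /(proj1 (HDn m)) [].
- by move=> y /(proj1 (HDn' n)) [].
- split; last exact: (proj2 (HDn m)).
  by move=> y y' /(proj1 (HDn m)) [_ ->] /(proj1 (HDn m)) [_ ->].
- split; last exact: (proj2 (HDn' n)).
  by move=> y y' /(proj1 (HDn' n)) [_ ->] /(proj1 (HDn' n)) [_ ->].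
Qed.

Lemma limit_point (Chi : set T) Oc Fc Gc (hc : constr_ok Chi Oc Fc Gc) (Z : nat -> set T) :
  (forall j, Z j.+1 `<=` Z j) -> (forall j, Z j `<=` Chi) -> (forall j, exists z, Z j z) ->
  (forall k, goodP Oc Fc Gc k (Z k.+1)) ->
  exists w, Chi w /\ forall j y, Z j.+1 y -> code j y = code j w.
Proof.
move=> Zdec ZC Zne Zgood.
have Zmono : forall i j, (i <= j)%N -> Z j `<=` Z i.
  move=> i j /subnK <-; elim: (j - i)%N => [//|d IH] y /Zdec; exact: IH.
have [u Hu] := choice (fun j => Zne j.+1).
have [w Hw] : exists w, forall j, code j w = code j (u j).
  apply: code_complete => j; apply: (proj1 (Zgood j)) => //; exact: Zdec.
have KF : forall j y, Z j.+1 y -> code j y = code j w.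
  by move=> j y Zy; rewrite Hw; apply: (proj1 (Zgood j)).
have KF2 : forall i j y, (i <= j)%N -> Z j.+1 y -> code i y = code i w.
  by move=> i j y ij Zy; apply: code_down ij _; exact: KF.
exists w; split => //.
case: hc => _ _ _ hH; apply: hH => k.
case: (proj2 (Zgood k)) => [ZF|[l [m [Hlm HO]]]].
  right => j; exists (u (maxn j k)); split.
    by apply: KF2 (leq_maxl j k) _.
  have Zu : Z k.+1 (u (maxn j k)) by apply: (Zmono k.+1 _ _ _ (Hu _)); rewrite ltnS leq_maxr.
  by split; [exact: ZC Zu|exact: ZF].
left; exists l => w' Hw'; apply: HO; rewrite Hw'.
have Zu : Z k.+1 (u (maxn l k)) by apply: (Zmono k.+1 _ _ _ (Hu _)); rewrite ltnS leq_maxr.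
rewrite -(Hlm _ Zu); symmetry; apply: KF2 (leq_maxl l k) (Hu _).
Qed.

Theorem abstract_sep : Sep Phi Psi.
Proof.
apply: boolp.contrapT => nS.
pose Inv (st : set T * set T) := [/\ st.1 `<=` Phi, st.2 `<=` Psi & ~ Sep st.1 st.2].
have Hstep : forall x : nat * (set T * set T), exists st' : set T * set T,
    Inv x.2 -> [/\ Inv st', st'.1 `<=` x.2.1, st'.2 `<=` x.2.2,
                 goodP O F G x.1 st'.1 & goodP O' F' G' x.1 st'.2].
  move=> [k [Z Z']]; have [[h1 h2 h3]|nI] := boolp.pselect (Inv (Z, Z')); last first.
    by exists (Z, Z') => /nI.
  have [Z1 [Z1' [s1 s1' nS1 g1 g1']]] := step_lemma k h1 h2 h3.
  exists (Z1, Z1') => _; split => //; split => //=.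
    exact: subset_trans s1 h1.
  exact: subset_trans s1' h2.
have [step Hs] := choice Hstep.
pose st := fix st j := if j is j'.+1 then step (j', st j') else (Phi, Psi).
have Hinv : forall j, Inv (st j).
  elim => [|j IH]; first by split.
  by case: (Hs (j, st j) IH).
have Hst : forall j, [/\ (st j.+1).1 `<=` (st j).1, (st j.+1).2 `<=` (st j).2,
                 goodP O F G j (st j.+1).1 & goodP O' F' G' j (st j.+1).2].
  by move=> j; case: (Hs (j, st j) (Hinv j)).
have ne1 : forall j, exists z, (st j).1 z.
  move=> j; apply: boolp.contrapT => H; case: (Hinv j) => _ _; apply.
  have -> : (st j).1 = set0 by apply/seteqP; split => // z Hz; apply: H; exists z.
  exact: Sep0.
have ne2 : forall j, exists z, (st j).2 z.
  move=> j; apply: boolp.contrapT => H; case: (Hinv j) => _ _; apply.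
  have -> : (st j).2 = set0 by apply/seteqP; split => // z Hz; apply: H; exists z.
  exact: Sep0'.
have Zd1 : forall j, (st j.+1).1 `<=` (st j).1 by move=> j; case: (Hst j).
have Zd2 : forall j, (st j.+1).2 `<=` (st j).2 by move=> j; case: (Hst j).
have ZC1 : forall j, (st j).1 `<=` Phi by move=> j; case: (Hinv j).
have ZC2 : forall j, (st j).2 `<=` Psi by move=> j; case: (Hinv j).
have g1 : forall k, goodP O F G k (st k.+1).1 by move=> k; case: (Hst k).
have g2 : forall k, goodP O' F' G' k (st k.+1).2 by move=> k; case: (Hst k).
have [w [Pw Kw]] := @limit_point Phi O F G hPhi (fun j => (st j).1) Zd1 ZC1 ne1 g1.
have [w' [Pw' Kw']] := @limit_point Psi O' F' G' hPsi (fun j => (st j).2) Zd2 ZC2 ne2 g2.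
have [j Hj] := haus Pw Pw'.
case: (Hinv j.+1) => _ _; apply; apply: Sep_mono Hj _ _.
  by move=> y /Kw.
by move=> y /Kw'.
Qed.

End AbstractSep.
Lemma seq_bound (F : seq nat) : exists n, forall x, x \in F -> (x < n)%N.
Proof.
elim: F => [|a F [n Hn]]; first by exists 0%N.
exists (maxn a.+1 n) => x; rewrite inE => /orP[/eqP->|/Hn xn].
  by rewrite leq_max leqnn.
by rewrite leq_max xn orbT.
Qed.

Lemma Pomega_open_cyl (W : set Pomega) (y : Pomega) : open W -> W y ->
  exists n, forall y' : Pomega, (forall i, (i < n)%N -> (y' i <-> y i)) -> W y'.
Proof.
move=> [D' _ <-] [F DF HF].
have [n Hn] := seq_bound F.
exists n => y' Hy'; exists F => //= x xF.
by apply/(Hy' x (Hn x xF)); apply: HF.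
Qed.

Lemma Pomega_nbhs_cyl (B : set Pomega) (y : Pomega) : nbhs y B ->
  exists n, forall y' : Pomega, (forall i, (i < n)%N -> (y' i <-> y i)) -> B y'.
Proof.
rewrite nbhsE => -[B0 [oB0 B0y] sB].
have [n Hn] := Pomega_open_cyl oB0 B0y.
by exists n => y' /Hn /sB.
Qed.

Lemma sub_nbhs_cyl (S : set Pomega) (B : set (set_type S)) (s : set_type S) : nbhs s B ->
  exists n, forall s' : set_type S,
    (forall i, (i < n)%N -> (set_val s' i <-> set_val s i)) -> B s'.
Proof.
rewrite nbhsE => -[B0 [[W' oW' HW] B0s] sB].
rewrite -HW in B0s.
have [n Hn] := Pomega_open_cyl oW' B0s.
exists n => s' Hs'; apply: sB; rewrite -HW; exact: Hn.
Qed.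

Lemma Baire_nbhs_cyl (A : set Baire) (q : Baire) : nbhs q A ->
  exists n, forall q' : Baire, (forall i, (i < n)%N -> q' i = q i) -> A q'.
Proof.
move=> nA; apply: boolp.contrapT => Hn.
have Hq : forall n, exists q' : Baire, (forall i, (i < n)%N -> q' i = q i) /\ ~ A q'.
  move=> n; apply: boolp.contrapT => H; apply: Hn; exists n => q' Hq'.
  apply: boolp.contrapT => nAq; apply: H; by exists q'.
have [qs Hqs] := choice Hq.
have cv : qs @ \oo --> q.
  apply/pointwise_cvgP => t.
  apply/discrete_cvg; rewrite !nbhs_simpl /=. apply: filterS (nbhs_infty_gt t) => m tm /=.
  exact: (proj1 (Hqs m) t tm).
have := cv _ nA; rewrite !nbhs_simpl /=. case=> N _ HN.
by case: (Hqs N) => _ H; apply: H; apply: HN; rewrite /= leqnn.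
Qed.
Lemma prod_cyl {Z : topologicalType} (f : Z -> Pomega)
  (hZ : forall (B : set Z) z, nbhs z B ->
     exists n, forall z', (forall i, (i < n)%N -> (f z' i <-> f z i)) -> B z')
  (W : set (Baire * Z)) (q : Baire) (z : Z) : open W -> W (q, z) ->
  exists n, forall (q' : Baire) (z' : Z),
    (forall i, (i < n)%N -> q' i = q i /\ (f z' i <-> f z i)) -> W (q', z').
Proof.
move=> oW Wqz.
have : nbhs (q, z) W by apply: open_nbhs_nbhs; split.
case=> [[A B] /= [nA nB] sAB].
have [n1 H1] := Baire_nbhs_cyl nA.
have [n2 H2] := hZ _ _ nB.
exists (maxn n1 n2) => q' z' H; apply: sAB; split => /=.
  apply: H1 => i i1; apply: (proj1 (H i _)).
  by rewrite leq_max i1.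
apply: H2 => i i2; apply: (proj2 (H i _)).
by rewrite leq_max i2 orbT.
Qed.

Lemma BP_cyl (W : set (Baire * Pomega)) (q : Baire) (y : Pomega) : open W -> W (q, y) ->
  exists n, forall (q' : Baire) (y' : Pomega),
    (forall i, (i < n)%N -> q' i = q i /\ (y' i <-> y i)) -> W (q', y').
Proof. exact: (@prod_cyl Pomega id Pomega_nbhs_cyl). Qed.

Lemma BY_cyl (S : set Pomega) (W : set (Baire * set_type S)) (q : Baire) (s : set_type S) :
  open W -> W (q, s) ->
  exists n, forall (q' : Baire) (s' : set_type S),
    (forall i, (i < n)%N -> q' i = q i /\ (set_val s' i <-> set_val s i)) -> W (q', s').
Proof. exact: (@prod_cyl (set_type S) set_val (@sub_nbhs_cyl S)). Qed.
Definition TT := (Baire * Baire * Pomega)%type.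

Fixpoint tcode (j : nat) (w : TT) : nat :=
  if j is j'.+1 then pickle (tcode j' w, (w.1.1 j', w.1.2 j', `[< w.2 j' >]))
  else 0%N.

Lemma asbool_iff (P Q : Prop) : `[< P >] = `[< Q >] <-> (P <-> Q).
Proof.
split => [E|E]; last by rewrite (boolp.propext E).
split => H0.
  have h : `[< P >] by apply/asboolP.
  by rewrite E in h; apply/asboolP.
have h : `[< Q >] by apply/asboolP.
by rewrite -E in h; apply/asboolP.
Qed.

Lemma tcode_eq j w w' : tcode j w = tcode j w' <->
  (forall i, (i < j)%N -> [/\ w.1.1 i = w'.1.1 i, w.1.2 i = w'.1.2 i & (w.2 i <-> w'.2 i)]).
Proof.
elim: j => [|j IH] /=; first by split => // _ i.
split.
  move/(pcan_inj pickleK) => -[/IH Hc Hp Hq /asbool_iff Hb] i.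
  rewrite ltnS leq_eqVlt => /orP[/eqP->|ij]; first by split.
  exact: Hc.
move=> H; have [Hp Hq Hb] := H j (ltnSn j).
have -> : tcode j w = tcode j w'.
  by apply/IH => i ij; apply: H; rewrite ltnS ltnW.
by rewrite Hp Hq (proj2 (asbool_iff _ _) Hb).
Qed.

Lemma tcode_nest j w w' : tcode j.+1 w = tcode j.+1 w' -> tcode j w = tcode j w'.
Proof.
move/tcode_eq => H; apply/tcode_eq => i ij; apply: H.
by rewrite ltnS ltnW.
Qed.

Lemma tcode_complete (u : nat -> TT) :
  (forall j, tcode j (u j.+1) = tcode j (u j)) -> exists w, forall j, tcode j w = tcode j (u j).
Proof.
move=> Hu.
exists (((fun i => (u i.+1).1.1 i) : Baire, (fun i => (u i.+1).1.2 i) : Baire),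
        ((fun i => (u i.+1).2 i) : Pomega)).
elim => [//|j IH] /=.
by rewrite IH -Hu.
Qed.

Section Inst.
Context (S : set Pomega).

Definition mkY (y : Pomega) (h : S y) : set_type S :=
  @exist Pomega (fun x => x \in S) y (mem_set h).
Lemma mkY_val y (h : S y) : set_val (mkY h) = y. Proof. by rewrite set_valE. Qed.
Lemma valS (s : set_type S) : S (set_val s).
Proof. by rewrite set_valE; case: s => y /= /set_mem. Qed.
Lemma val_injY (s s' : set_type S) : set_val s = set_val s' -> s = s'.
Proof. rewrite set_valE; exact: val_inj. Qed.

Definition SepY (Z Z' : set TT) := exists C : set (set_type S), [/\ Borel C,
  (forall w, Z w -> forall s : set_type S, set_val s = w.2 -> C s) &
  (forall w, Z' w -> forall s : set_type S, set_val s = w.2 -> ~ C s)].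

Lemma SepY_union (Z Z' : nat -> set TT) : (forall m n, SepY (Z m) (Z' n)) ->
  SepY (\bigcup_(m in [set: nat]) Z m) (\bigcup_(n in [set: nat]) Z' n).
Proof.
move=> H.
have H1 : forall m, exists Cm : nat -> set (set_type S), forall n,
    [/\ Borel (Cm n),
  (forall w, Z m w -> forall s : set_type S, set_val s = w.2 -> Cm n s) &
  (forall w, Z' n w -> forall s : set_type S, set_val s = w.2 -> ~ Cm n s)].
  by move=> m; have [f hf] := choice (H m); exists f.
have [C HC] := choice H1.
exists (\bigcup_(m in [set: nat]) \bigcap_(n in [set: nat]) C m n); split.
- apply: Borel_bigcup => m; apply: Borel_bigcap => n; by case: (HC m n).
- move=> w [m _ Zw] s hs; exists m => // n _.
  by case: (HC m n) => _ h _; exact: h Zw s hs.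
- move=> w [n _ Zw] s hs [m _ Hm].
  by case: (HC m n) => _ _ h; exact: h Zw s hs (Hm n I).
Qed.

Lemma SepY_mono Z Z' Z1 Z1' : SepY Z Z' -> Z1 `<=` Z -> Z1' `<=` Z' -> SepY Z1 Z1'.
Proof.
move=> [C [hC h1 h2]] s1 s2; exists C; split => //.
  by move=> w /s1; exact: h1.
by move=> w /s2; exact: h2.
Qed.

Lemma SepY0 Z' : SepY set0 Z'.
Proof. by exists set0; split; [exact: Borel_set0|move=> w []|move=> w _ s _ []]. Qed.

Lemma SepY0' Z : SepY Z set0.
Proof. by exists setT; split; [apply: Borel_open; exact: openT|move=> w _ s _|move=> w []]. Qed.

End Inst.
Lemma odd_S_double i : odd (i.*2.+1) = true.
Proof. by rewrite /= odd_double. Qed.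
Lemma half_S_double i : (i.*2.+1)./2 = i.
Proof. by rewrite /= uphalf_double. Qed.

Lemma Pi02_iff {Z : Type} (R : set Z) (U V : nat -> set Z) :
  ~` R = \bigcup_(k in [set: nat]) (U k `\` V k) ->
  forall z, R z <-> forall k, U k z -> V k z.
Proof.
move=> hR z; split.
  move=> Rz k Uk; apply: boolp.contrapT => nV.
  have : (~` R) z by rewrite hR; exists k.
  by apply.
move=> H; apply: boolp.contrapT => nR.
have : (~` R) z by [].
rewrite hR => -[k _ [Uk nVk]]; exact: nVk (H k Uk).
Qed.

Section Constr.
Context (S : set Pomega) (R : set (Baire * Pomega)) (U V : nat -> set (Baire * Pomega)).
Context (oU : forall k, open (U k)) (oV : forall k, open (V k)).
Context (hR : ~` R = \bigcup_(k in [set: nat]) (U k `\` V k)).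
Context (hS : forall y, S y <-> exists q, R (q, y)).
Context (P : set (Baire * set_type S)) (U' V' : nat -> set (Baire * set_type S)).
Context (oU' : forall k, open (U' k)) (oV' : forall k, open (V' k)).
Context (hP : ~` P = \bigcup_(k in [set: nat]) (U' k `\` V' k)).

Definition PhiP := [set w : TT | R (w.1.2, w.2) /\
  forall s : set_type S, set_val s = w.2 -> P (w.1.1, s)].
Definition OP (k : nat) : set TT := if odd k
  then [set w | forall s : set_type S, set_val s = w.2 -> V' k./2 (w.1.1, s)]
  else [set w | V k./2 (w.1.2, w.2)].
Definition FP (k : nat) : set TT := if odd k
  then [set w | forall s : set_type S, set_val s = w.2 -> ~ U' k./2 (w.1.1, s)]
  else [set w | ~ U k./2 (w.1.2, w.2)].
Definition GP (k : nat) : set TT := if odd k then [set w | S w.2] else setT.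

Lemma PhiP_S w : PhiP w -> S w.2.
Proof. by move=> [Rw _]; apply/hS; exists w.1.2. Qed.

Lemma PhiP_ok : constr_ok tcode PhiP OP FP GP.
Proof.
split.
- move=> k w Pw; rewrite /GP; case: (odd k) => //; exact: PhiP_S.
- move=> k w Pw; have Sy := PhiP_S Pw; case: Pw => Rw Pw.
  rewrite /FP /OP; case: (odd k).
    have Ps := Pw _ (mkY_val Sy).
    have [Vs|nVs] := boolp.pselect (V' k./2 (w.1.1, mkY Sy)).
      by right => s hs; have -> : s = mkY Sy by apply: val_injY; rewrite mkY_val.
    left => s hs; have -> : s = mkY Sy by apply: val_injY; rewrite mkY_val.
    move=> Us.
    by apply: nVs; apply: (proj1 (Pi02_iff hP _) Ps).
  have [Vs|nVs] := boolp.pselect (V k./2 (w.1.2, w.2)); first by right.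
  by left => Us; apply: nVs; apply: (proj1 (Pi02_iff hR _) Rw).
- move=> k w Pw; have Sy := PhiP_S Pw; case: Pw => Rw Pw.
  rewrite /OP /GP; case: (odd k).
    move=> Ow; have := Ow _ (mkY_val Sy) => Vs.
    have [n Hn] := BY_cyl (@oV' k./2) Vs.
    exists n => w' /tcode_eq Hc Sy' s' hs'; apply: Hn => i iln.
    have [h1 _ h3] := Hc i iln; split => //.
    by rewrite hs' mkY_val; split => [/h3|/h3].
  move=> Vw; have [n Hn] := BP_cyl (@oV k./2) Vw.
  exists n => w' /tcode_eq Hc _; apply: Hn => i iln.
  by have [_ h2 h3] := Hc i iln; split => //; split => [/h3|/h3].
- move=> w Hk.
  have Rw : R (w.1.2, w.2).
    apply/(Pi02_iff hR) => i Ui; case: (Hk i.*2) => [[l Hl]|HF].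
      by have := Hl w erefl; rewrite /GP /OP odd_double doubleK; apply.
    have [n Hn] := BP_cyl (@oU i) Ui.
    have [w' [/tcode_eq Hc [_ Fw']]] := HF n.
    exfalso; move: Fw'; rewrite /FP odd_double doubleK; apply.
    by apply: Hn => j jn; have [_ h2 h3] := Hc j jn; split => //; split => [/h3|/h3].
  have Sy : S w.2 by apply/hS; exists w.1.2.
  split => // s hs; apply/(Pi02_iff hP) => i Ui.
  case: (Hk i.*2.+1) => [[l Hl]|HF].
    have := Hl w erefl; rewrite /GP /OP odd_S_double half_S_double.
    by move=> /(_ Sy s hs).
  have [n Hn] := BY_cyl (@oU' i) Ui.
  have [w' [/tcode_eq Hc [Pw' Fw']]] := HF n.
  have Sy' := PhiP_S Pw'.
  exfalso; move: Fw'; rewrite /FP odd_S_double half_S_double => /(_ _ (mkY_val Sy')).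
  apply; apply: Hn => j jn; have [h1 _ h3] := Hc j jn; split => //.
  by rewrite mkY_val hs; split => [/h3|/h3].
Qed.

End Constr.
Lemma scott_basic_open (F : fin_index) : open (scott_basic F).
Proof. by exists [set F] => //; rewrite bigcup_set1. Qed.

Lemma open_coord_Y (S : set Pomega) (n : nat) : open [set s : set_type S | set_val s n].
Proof.
exists (scott_basic [:: n]); first exact: scott_basic_open.
apply/seteqP; split => s /=.
  by move=> H; apply: H; rewrite inE.
by move=> H m; rewrite inE => /eqP ->.
Qed.

Lemma sub_Delta11_Borel (S : set Pomega) (hS : Sigma11 S) (B : set (set_type S)) :
  Sigma11 B -> Sigma11 (~` B) -> Borel B.
Proof.
case: hS => R [[U [V [oUV hRd]]] Sdef].
have hS' : forall y, S y <-> exists q, R (q, y) by move=> y; rewrite Sdef.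
have oU : forall k, open (U k) by move=> k; case: (oUV k).
have oV : forall k, open (V k) by move=> k; case: (oUV k).
move=> [P [[UP [VP [oUVP hPd]]] Bdef]] [Q [[UQ [VQ [oUVQ hQd]]] nBdef]].
have oUP : forall k, open (UP k) by move=> k; case: (oUVP k).
have oVP : forall k, open (VP k) by move=> k; case: (oUVP k).
have oUQ : forall k, open (UQ k) by move=> k; case: (oUVQ k).
have oVQ : forall k, open (VQ k) by move=> k; case: (oUVQ k).
have hPhi := PhiP_ok oU oV hRd hS' oUP oVP hPd.
have hPsi := PhiP_ok oU oV hRd hS' oUQ oVQ hQd.
have PB : forall w, PhiP R P w -> forall s : set_type S, set_val s = w.2 -> B s.
  by move=> w [_ Hw] s hs; rewrite Bdef; exists w.1.1; apply: Hw.
have QB : forall w, PhiP R Q w -> forall s : set_type S, set_val s = w.2 -> ~ B s.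
  by move=> w [_ Hw] s hs; have : (~` B) s by rewrite nBdef; exists w.1.1; apply: Hw.
have haus : forall w w', PhiP R P w -> PhiP R Q w' ->
    exists j, SepY S [set v | tcode j v = tcode j w] [set v | tcode j v = tcode j w'].
  move=> w w' Pw Qw.
  have Sy := PhiP_S hS' Pw; have Sy' := PhiP_S hS' Qw.
  have Bs := PB w Pw _ (mkY_val Sy); have nBs := QB w' Qw _ (mkY_val Sy').
  have neq : w.2 <> w'.2.
    move=> E; apply: nBs; have -> : mkY Sy' = mkY Sy by apply: val_injY; rewrite !mkY_val E.
    exact: Bs.
  have [n Hn] : exists n, ~ (w.2 n <-> w'.2 n).
    apply: boolp.contrapT => H; apply: neq; apply: funext => n.
    apply: boolp.propext; apply: boolp.contrapT => H'; apply: H; by exists n.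
  exists n.+1.
  have Hv : forall v u, tcode n.+1 v = tcode n.+1 u -> (v.2 n <-> u.2 n).
    by move=> v u /tcode_eq /(_ n (ltnSn n)) [].
  have [yn|nyn] := boolp.pselect (w.2 n).
    exists [set s : set_type S | set_val s n]; split.
    - by apply: Borel_open; exact: open_coord_Y.
    - by move=> v /Hv Hvw s /= ->; apply/Hvw.
    - move=> v /Hv Hvw s /= -> /Hvw y'n; apply: Hn; by split.
  have y'n : w'.2 n by apply: boolp.contrapT => nb; apply: Hn; split.
  exists (~` [set s : set_type S | set_val s n]); split.
  - by apply: Borel_compl; apply: Borel_open; exact: open_coord_Y.
  - by move=> v /Hv Hvw s /= -> /Hvw.
  - by move=> v /Hv Hvw s /= -> H; apply: H; apply/Hvw.
have [C [hC h1 h2]] := @abstract_sep TT tcode tcode_nest tcode_complete (SepY S)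
  (@SepY_union S) (@SepY_mono S) (@SepY0 S) (@SepY0' S) _ _ _ _ _ _ _ _ hPhi hPsi haus.
suff -> : B = C by [].
apply/seteqP; split => s.
  rewrite Bdef => -[p Pps].
  have [q Rq] := (proj1 (hS' _)) (valS s).
  apply: (h1 ((p, q), set_val s)) => //; split => // s' hs'.
  by have -> : s' = s by apply: val_injY.
move=> Cs; apply: boolp.contrapT => nBs.
have : (~` B) s by [].
rewrite nBdef => -[p Qps].
have [q Rq] := (proj1 (hS' _)) (valS s).
apply: (h2 ((p, q), set_val s)) Cs => //; split => // s' hs'.
by have -> : s' = s by apply: val_injY.
Qed.

Unset Implicit Arguments.
Set Strict Implicit.

Theorem proposition3p8 (X : topologicalType) :
  CB0_Delta11 X ->
  [set B : set X | Delta11 B] =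
    \bigcup_(a in [set: ord]) [set B : set X | Sigma0 a B].
Proof.
move=> [S [[hS1 hS2] [f [g [fg gf cf cg]]]]].
apply/seteqP; split => B.
  move=> hB.
  have hB' := @Delta11_preimage _ _ g B cg hB.
  have [a Ha] : Borel (f @^-1` (g @^-1` B)).
    apply: (@Borel_preimage _ _ f _ cf); case: hB' => h1 h2.
    exact (@sub_Delta11_Borel S hS1 _ h1 h2).
  exists a => //.
  have <- : f @^-1` (g @^-1` B) = B by apply/seteqP; split => x /=; rewrite fg.
  exact: Ha.
by move=> [a _ Ha]; apply: Borel_Delta11; exists a.
Qed.
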